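(* Let $\mathfrak g$ be of type $A_n$. Then $(\mathcal B(\infty),\mathrm{wt},\varepsilon_i^\ast,\varphi_i^\ast,\widetilde e_i^\ast,\widetilde f_i^\ast)_{i\in I}$ is a highest weight $\mathfrak g$-crystal.
   Context: $I=\{1,\dots,n\}$, $\langle h_i,\alpha_j\rangle=2$ if $i=j$, $-1$ if $|i-j|=1$, $0$ otherwise. $\mathcal I=\{(s,t)\in\mathbb Z_{>0}\times I:s+t\le n+1\}$; $\mathcal B(\infty)$ is the set of $b=(b_{s,t})_{(s,t)\in\mathcal I}\in\mathbb Z_{\ge0}^{\mathcal I}$ with $b_{1,k}\ge b_{2,k-1}\ge\dots\ge b_{k,1}$ for $1\le k\le n$. Convention: $b_{s,t}=0$, $\mathbf e_{s,t}=0$ for $(s,t)\notin\mathcal I$ ($\mathbf e_{s,t}$ standard basis vectors). $\partial^\ast_{s,t}(b)=b_{s-1,t}-b_{s-1,t+1}-b_{s,t-1}+b_{s,t}$. For $i\in I$, $1\le k\le i$: $\Sigma^\ast_k(b)=\sum_{t=1}^k\partial^\ast_{t,i+1-t}(b)$; $\varepsilon_i^\ast(b)=\max_{1\le k\le i}\Sigma^\ast_k(b)$; $m_i^\ast(b)$, $M_i^\ast(b)$ the smallest, largest $k$ attaining the maximum. $\mathrm{wt}(b)=-\sum b_{s,t}\alpha_t$; $\varphi_i^\ast(b)=\varepsilon_i^\ast(b)+\langle h_i,\mathrm{wt}(b)\rangle$; $\widetilde f_i^\ast(b)=b+\sum_{t=1}^{m_i^\ast(b)}(\mathbf e_{t,i+1-t}-\mathbf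 e_{t-1,i+1-t})$; $\widetilde e_i^\ast(b)=b-\sum_{t=1}^{M_i^\ast(b)}(\mathbf e_{t,i+1-t}-\mathbf e_{t-1,i+1-t})$ if $\varepsilon_i^\ast(b)>0$, and $\widetilde e_i^\ast(b)=\mathbf 0$ (formal symbol) otherwise. A crystal is a set $B$ with $\mathrm{wt}:B\to P$, $\widetilde e_i,\widetilde f_i:B\to B\cup\{\mathbf 0\}$, $\varepsilon_i,\varphi_i:B\to\mathbb Z\cup\{-\infty\}$ such that $\varphi_i=\varepsilon_i+\langle h_i,\mathrm{wt}\rangle$; if $\widetilde e_ib\ne\mathbf0$ then $\mathrm{wt}(\widetilde e_ib)=\mathrm{wt}(b)+\alpha_i$, $\varepsilon_i(\widetilde e_ib)=\varepsilon_i(b)-1$, $\varphi_i(\widetilde e_ib)=\varphi_i(b)+1$; if $\widetilde f_ib\ne\mathbf0$ then $\mathrm{wt}(\widetilde f_ib)=\mathrm{wt}(b)-\alpha_i$, $\varepsilon_i(\widetilde f_ib)=\varepsilon_i(b)+1$, $\varphi_i(\widetilde f_ib)=\varphi_i(b)-1$; $\widetilde f_ib=b'$ iff $b=\widetilde e_ib'$; $\varepsilon_i(b)=-\infty$ implies $\widetilde e_ib=\widetilde f_ib=\mathbf0$. It is a highest weight crystal if there is $b_0\in B$ reachable from every $b$ by a sequence of $\widetilde e_i$'s and $\varepsilon_i(b)=\max\{m\ge0:\widetilde e_i^m b\ne\mathbf 0\}$ for all $b,i$. *)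

(* Defs.v *)
From HB Require Import structures.
From mathcomp Require Import all_boot all_order all_algebra.
Set Implicit Arguments. Unset Strict Implicit. Unset Printing Implicit Defensive.
Import Order.TTheory GRing.Theory Num.Theory.
Local Open Scope ring_scope.

(* A crystal structure on the subset S of an ambient type A; the formal
   symbol 0 is rendered as None. *)

Definition iter_e (I A : Type) (e : I -> A -> option A) (i : I) (m : nat) (b : A)
  : option A := iter m (fun ob => obind (e i) ob) (Some b).

Definition is_crystal (I : finType) (P : zmodType) (pair : I -> P -> int)
  (alpha : I -> P) (A : Type) (S : pred A) (wt : A -> P)
  (eps phi : I -> A -> int) (e f : I -> A -> option A) : Prop :=
  forall (i : I) (b : A), S b ->
  [/\ phi i b = eps i b + pair i (wt b),
      (forall b', e i b = Some b' -> S b') /\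
      (forall b', f i b = Some b' -> S b'),
      (forall b', e i b = Some b' ->
         [/\ wt b' = wt b + alpha i, eps i b' = eps i b - 1
           & phi i b' = phi i b + 1]),
      (forall b', f i b = Some b' ->
         [/\ wt b' = wt b - alpha i, eps i b' = eps i b + 1
           & phi i b' = phi i b - 1])
    & (forall b', S b' -> (f i b = Some b' <-> e i b' = Some b))].

Definition is_highest_weight_crystal (I : finType) (P : zmodType)
  (pair : I -> P -> int) (alpha : I -> P) (A : Type) (S : pred A)
  (wt : A -> P) (eps phi : I -> A -> int) (e f : I -> A -> option A) : Prop :=
  [/\ is_crystal pair alpha S wt eps phi e f,
      (exists2 b0, S b0 &
         forall b, S b -> exists s : seq I,
           foldl (fun ob i => obind (e i) ob) (Some b) s = Some b0)
    & (forall (i : I) (b : A), S b ->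
         [/\ 0 <= eps i b,
             iter_e e i `|eps i b|%N b <> None
           & forall m : nat, iter_e e i m b <> None -> (m%:Z <= eps i b)])].

(* Indices: i : 'I_n stands for the index i.+1 of I = {1,...,n}. *)

Definition cartanA (i j : nat) : int :=
  if i == j then 2 else if (i == j.+1) || (j == i.+1) then -1 else 0.

(* weights: coordinates in the basis of simple roots; coordinate j : 'I_n
   is the coefficient of alpha_{j+1} *)
Definition weightA (n : nat) := {ffun 'I_n -> int}.

Definition alphaA (n : nat) (i : 'I_n) : weightA n := [ffun j => (i == j)%:Z].

Definition pairA (n : nat) (i : 'I_n) (la : weightA n) : int :=
  \sum_(j < n) cartanA i.+1 j.+1 * la j.

Definition arr (n : nat) := {ffun 'I_n.+1 * 'I_n.+1 -> int}.

Definition inI (n s t : nat) : bool := [&& 0 < s, 0 < t & s + t <= n.+1]%N.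

Definition getb (n : nat) (b : arr n) (s t : nat) : int :=
  if inI n s t then b (inord s, inord t) else 0.

Definition ebas (n : nat) (s t : nat) : arr n :=
  [ffun p : 'I_n.+1 * 'I_n.+1 => ([&& (p.1 : nat) == s, (p.2 : nat) == t & inI n s t] : nat)%:Z].

Definition inBinf (n : nat) (b : arr n) : bool :=
  [forall p : 'I_n.+1 * 'I_n.+1, (0 <= b p) && (inI n p.1 p.2 || (b p == 0))] &&
  [forall k : 'I_n.+1, forall s : 'I_n.+1,
     ((1 <= s)%N && (s < k)%N) ==> (getb b (s.+1) (k - s)%N <= getb b s (k.+1 - s)%N)].

Definition partial_star (n : nat) (b : arr n) (s t : nat) : int :=
  getb b s.-1 t - getb b s.-1 t.+1 - getb b s t.-1 + getb b s t.

Definition Sigma_star (n : nat) (i : nat) (b : arr n) (k : nat) : int :=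
  \sum_(1 <= t < k.+1) partial_star b t (i.+1 - t)%N.

Definition eps_star_nat (n : nat) (i : nat) (b : arr n) : int :=
  foldr (fun k acc => Num.max (Sigma_star i b k) acc) (Sigma_star i b 1)
        (iota 1 i).

Definition m_star (n : nat) (i : nat) (b : arr n) : nat :=
  head 0%N [seq k <- iota 1 i | Sigma_star i b k == eps_star_nat i b].

Definition M_star (n : nat) (i : nat) (b : arr n) : nat :=
  last 0%N [seq k <- iota 1 i | Sigma_star i b k == eps_star_nat i b].

Definition wtB (n : nat) (b : arr n) : weightA n :=
  [ffun j : 'I_n => - \sum_(0 <= s < n.+2) getb b s j.+1].

Definition shift_vec (n : nat) (i m : nat) : arr n :=
  \sum_(1 <= t < m.+1) (ebas n t (i.+1 - t)%N - ebas n t.-1 (i.+1 - t)%N).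

Definition eps_star (n : nat) (i : 'I_n) (b : arr n) : int := eps_star_nat i.+1 b.

Definition phi_star (n : nat) (i : 'I_n) (b : arr n) : int :=
  eps_star i b + pairA i (wtB b).

Definition f_star (n : nat) (i : 'I_n) (b : arr n) : option (arr n) :=
  Some (b + shift_vec n i.+1 (m_star i.+1 b)).

Definition e_star (n : nat) (i : 'I_n) (b : arr n) : option (arr n) :=
  if 0 < eps_star i b then Some (b - shift_vec n i.+1 (M_star i.+1 b)) else None.

(* Main.v *)
Require Import Defs.
From mathcomp Require Import all_boot all_order all_algebra zify.
Set Implicit Arguments. Unset Strict Implicit. Unset Printing Implicit Defensive.
Import Order.TTheory GRing.Theory Num.Theory.
Local Open Scope ring_scope.

Lemma getbD n (b1 b2 : arr n) s t : getb (b1 + b2) s t = getb b1 s t + getb b2 s t.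
Proof. by rewrite /getb; case: ifP => _; rewrite ?ffunE ?addr0. Qed.
Lemma getbB n (b1 b2 : arr n) s t : getb (b1 - b2) s t = getb b1 s t - getb b2 s t.
Proof. by rewrite /getb; case: ifP => _; rewrite ?ffunE ?subr0. Qed.
Lemma getb0 n s t : getb (0 : arr n) s t = 0.
Proof. by rewrite /getb; case: ifP => _; rewrite ?ffunE. Qed.
Lemma getb_out n (b : arr n) s t : ~~ inI n s t -> getb b s t = 0.
Proof. by rewrite /getb => /negbTE ->. Qed.
Lemma getb_in n (b : arr n) (p : 'I_n.+1 * 'I_n.+1) : inI n p.1 p.2 -> getb b p.1 p.2 = b p.
Proof. by case: p => a c /= h; rewrite /getb h !inord_val. Qed.

Lemma getb_ebas n a c s t :
  getb (ebas n a c) s t = ([&& s == a, t == c & inI n s t] : nat)%:Z.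
Proof.
rewrite /getb /ebas; case: ifP => h; last by rewrite !andbF.
have hs : (s < n.+1)%N by move: h; rewrite /inI; lia.
have ht : (t < n.+1)%N by move: h; rewrite /inI; lia.
rewrite ffunE /= !inordK //.
by case: eqP => //= <-; case: eqP => //= <-; rewrite h.
Qed.

Definition Dsh (i m s t : nat) : int :=
  ((s + t == i.+1) && (0 < s <= m))%N%:Z - ((s + t == i) && (0 < s < m))%N%:Z.

Lemma getb_shift n i m s t : (m <= i)%N -> (i <= n)%N ->
  getb (shift_vec n i m) s t = Dsh i m s t.
Proof.
move=> hm hi; elim: m hm => [|m IH] hm.
  by rewrite /shift_vec big_geq // getb0 /Dsh; lia.
have -> : shift_vec n i m.+1 = shift_vec n i m +
   (ebas n m.+1 (i.+1 - m.+1)%N - ebas n m (i.+1 - m.+1)%N).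
  by rewrite /shift_vec big_nat_recr.
rewrite getbD getbB !getb_ebas IH; last by lia.
rewrite /Dsh /inI; lia.
Qed.

Lemma shift_out n i m (p : 'I_n.+1 * 'I_n.+1) : ~~ inI n p.1 p.2 -> shift_vec n i m p = 0.
Proof.
move=> h; rewrite /shift_vec sum_ffunE big1 // => t _; rewrite !ffunE /=.
have H : forall a c, ([&& (p.1 : nat) == a, (p.2 : nat) == c & inI n a c] : nat)%:Z = 0 :> int.
  by move=> a c; case: eqP => //= <-; case: eqP => //= <-; rewrite (negbTE h).
by rewrite !H subr0.
Qed.

Lemma Sigma_XY n i (b : arr n) k : (k <= i)%N ->
  Sigma_star i b k = getb b k (i.+1 - k) - getb b k (i - k).
Proof.
move=> hk; rewrite /Sigma_star.
rewrite (telescope_sumr_eq (fun j => getb b j.-1 (i.+1 - j.-1) - getb b j.-1 (i - j.-1))) //=.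
  by rewrite /getb /inI /= subr0.
move=> j hj; rewrite /partial_star /=.
have e1 : (i.+1 - j.-1 = (i.+1 - j).+1)%N by lia.
have e2 : (i - j.-1 = i.+1 - j)%N by lia.
have e3 : ((i.+1 - j).-1 = i - j)%N by lia.
rewrite e1 e2 e3; lia.
Qed.

Definition fmax (sg : nat -> int) (l : seq nat) (v : int) :=
  foldr (fun k acc => Num.max (sg k) acc) v l.

Lemma fmax_ge sg l v : v <= fmax sg l v /\ forall k, k \in l -> sg k <= fmax sg l v.
Proof.
elim: l => [|a l [IH1 IH2]] /=; first by split.
split; first by rewrite le_max IH1 orbT.
move=> k; rewrite in_cons => /orP [/eqP ->|hk]; first by rewrite le_max lexx.
by rewrite le_max IH2 ?orbT.
Qed.

Lemma max_cases (x y : int) : (x <= y /\ Num.max x y = y) \/ (y < x /\ Num.max x y = x).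
Proof. case: (leP x y) => h; [left; split => //; exact/max_idPr | right; split => //; exact/max_idPl/ltW]. Qed.

Lemma fmax_att sg l v : fmax sg l v = v \/ exists2 k, k \in l & sg k = fmax sg l v.
Proof.
rewrite /fmax; elim: l => [|a l IH] /=; first by left.
case: (max_cases (sg a) (foldr (fun k acc => Num.max (sg k) acc) v l)) => [[h ->]|[h ->]].
  case: IH => [->|[k hk hk2]]; first by left.
  by right; exists k; rewrite ?in_cons ?hk ?orbT.
by right; exists a => //; rewrite in_cons eqxx.
Qed.

Lemma eps_ge n i (b : arr n) k : (1 <= k <= i)%N -> Sigma_star i b k <= eps_star_nat i b.
Proof.
move=> hk; case: (fmax_ge (fun k => Sigma_star i b k) (iota 1 i) (Sigma_star i b 1)) => _ H.
by apply: H; rewrite mem_iota; lia.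
Qed.

Lemma eps_att n i (b : arr n) : (1 <= i)%N ->
  exists2 k, (1 <= k <= i)%N & Sigma_star i b k = eps_star_nat i b.
Proof.
move=> hi; case: (fmax_att (fun k => Sigma_star i b k) (iota 1 i) (Sigma_star i b 1)).
  by move=> h; exists 1%N => //; lia.
by move=> [k hk h]; exists k => //; move: hk; rewrite mem_iota; lia.
Qed.

Lemma eps_char n i (b : arr n) v : (1 <= i)%N ->
  (forall k, (1 <= k <= i)%N -> Sigma_star i b k <= v) ->
  (exists2 k, (1 <= k <= i)%N & Sigma_star i b k = v) -> eps_star_nat i b = v.
Proof.
move=> hi H1 [k hk hv]; have [k' hk' he] := eps_att b hi.
apply/eqP; rewrite eq_le; apply/andP; split; first by rewrite -he; exact: H1.
by rewrite -hv; exact: eps_ge.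
Qed.

Lemma head_filter_iota (P : pred nat) a c : (exists2 k, (a <= k < a + c)%N & P k) ->
  let h := head 0%N [seq k <- iota a c | P k] in
  [/\ (a <= h < a + c)%N, P h & forall k, (a <= k < h)%N -> ~~ P k].
Proof.
elim: c a => [|c IH] a [k hk hP]; first by lia.
rewrite /=; case: ifP => hPa /=.
  by split => //; [lia | move=> j; lia].
have hk2 : (a.+1 <= k < a.+1 + c)%N.
  by case: (eqVneq k a) => [e|ne]; [by rewrite e hPa in hP | lia].
case: (IH a.+1 (ex_intro2 _ _ k hk2 hP)) => h1 h2 h3; split => //; first by lia.
move=> j hj; case: (eqVneq j a) => [->|ne]; first by rewrite hPa.
by apply: h3; lia.
Qed.

Lemma last_filter_iota (P : pred nat) a c : (exists2 k, (a <= k < a + c)%N & P k) ->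
  let h := last 0%N [seq k <- iota a c | P k] in
  [/\ (a <= h < a + c)%N, P h & forall k, (h < k < a + c)%N -> ~~ P k].
Proof.
elim: c => [|c IH] [k hk hP]; first by lia.
rewrite -addn1 iotaD cats1 filter_rcons /=.
case: ifP => hPa /=.
  by rewrite last_rcons; split => //; [lia | move=> j; lia].
have hk2 : (a <= k < a + c)%N.
  by case: (eqVneq k (a + c)%N) => [e|ne]; [by rewrite e hPa in hP | lia].
case: (IH (ex_intro2 _ _ k hk2 hP)) => h1 h2 h3; split => //; first by lia.
move=> j hj; case: (eqVneq j (a + c)%N) => [->|ne]; first by rewrite hPa.
by apply: h3; lia.
Qed.

Lemma m_star_spec n i (b : arr n) : (1 <= i)%N ->
  [/\ (1 <= m_star i b <= i)%N, Sigma_star i b (m_star i b) = eps_star_nat i b &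
      forall k, (1 <= k < m_star i b)%N -> Sigma_star i b k < eps_star_nat i b].
Proof.
move=> hi; have [k hk he] := eps_att b hi.
have hex : exists2 k, (1 <= k < 1 + i)%N & (fun k => Sigma_star i b k == eps_star_nat i b) k.
  by exists k; [lia | apply/eqP].
rewrite /m_star; case: (head_filter_iota hex) => h1 /eqP h2 h3; split; [lia | by [] | ].
move=> j hj; rewrite lt_neqAle (h3 j hj) eps_ge //.
move: hj h1; lia.
Qed.

Lemma M_star_spec n i (b : arr n) : (1 <= i)%N ->
  [/\ (1 <= M_star i b <= i)%N, Sigma_star i b (M_star i b) = eps_star_nat i b &
      forall k, (M_star i b < k <= i)%N -> Sigma_star i b k < eps_star_nat i b].
Proof.
move=> hi; have [k hk he] := eps_att b hi.
have hex : exists2 k, (1 <= k < 1 + i)%N & (fun k => Sigma_star i b k == eps_star_nat i b) k.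
  by exists k; [lia | apply/eqP].
rewrite /M_star; case: (last_filter_iota hex) => h1 /eqP h2 h3; split; [lia | by [] | ].
move=> j hj; rewrite lt_neqAle h3 ?eps_ge //; move: hj h1; lia.
Qed.

Lemma m_star_uniq n i (b : arr n) m : (1 <= m <= i)%N ->
  Sigma_star i b m = eps_star_nat i b ->
  (forall k, (1 <= k < m)%N -> Sigma_star i b k < eps_star_nat i b) -> m_star i b = m.
Proof.
move=> hm he hlt; have hi : (1 <= i)%N by lia.
have [h1 h2 h3] := m_star_spec b hi.
case: (ltngtP (m_star i b) m) => // c.
  { have hh : (1 <= m_star i b < m)%N by lia. by have := hlt _ hh; rewrite h2 ltxx. }
{ have hh : (1 <= m < m_star i b)%N by lia. by have := h3 m hh; rewrite he ltxx. }
Qed.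

Lemma M_star_uniq n i (b : arr n) m : (1 <= m <= i)%N ->
  Sigma_star i b m = eps_star_nat i b ->
  (forall k, (m < k <= i)%N -> Sigma_star i b k < eps_star_nat i b) -> M_star i b = m.
Proof.
move=> hm he hlt; have hi : (1 <= i)%N by lia.
have [h1 h2 h3] := M_star_spec b hi.
case: (ltngtP (M_star i b) m) => // c.
  { have hh : (M_star i b < m <= i)%N by lia. by have := h3 m hh; rewrite he ltxx. }
{ have hh : (m < M_star i b <= i)%N by lia. by have := hlt _ hh; rewrite h2 ltxx. }
Qed.

Lemma Sigma_f n i (b : arr n) m k : (1 <= m <= i)%N -> (i <= n)%N -> (1 <= k <= i)%N ->
  Sigma_star i (b + shift_vec n i m) k = Sigma_star i b k + (k <= m)%N%:Z + (k < m)%N%:Z.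
Proof.
move=> hm hi hk; rewrite !Sigma_XY; try lia.
rewrite !getbD !getb_shift; try lia.
rewrite /Dsh; lia.
Qed.

Lemma Sigma_e n i (b : arr n) m k : (1 <= m <= i)%N -> (i <= n)%N -> (1 <= k <= i)%N ->
  Sigma_star i (b - shift_vec n i m) k = Sigma_star i b k - (k <= m)%N%:Z - (k < m)%N%:Z.
Proof.
move=> hm hi hk; rewrite !Sigma_XY; try lia.
rewrite !getbB !getb_shift; try lia.
rewrite /Dsh; lia.
Qed.

Lemma eps_f n i (b : arr n) : (1 <= i <= n)%N ->
  eps_star_nat i (b + shift_vec n i (m_star i b)) = eps_star_nat i b + 1 /\
  M_star i (b + shift_vec n i (m_star i b)) = m_star i b.
Proof.
move=> hi; have hi1 : (1 <= i)%N by lia.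
have [h1 h2 h3] := m_star_spec b hi1.
have E : eps_star_nat i (b + shift_vec n i (m_star i b)) = eps_star_nat i b + 1.
  apply: eps_char => //.
    move=> k hk; rewrite Sigma_f //; try lia.
    have := eps_ge b hk; case: (ltnP k (m_star i b)) => c.
      have := h3 k ltac:(lia); lia.
    case: (eqVneq k (m_star i b)) => [e|ne]; first by rewrite e h2; lia.
    lia.
  by exists (m_star i b) => //; rewrite Sigma_f //; try lia; rewrite h2; lia.
split => //; apply: M_star_uniq => //.
  by rewrite Sigma_f //; try lia; rewrite h2 E; lia.
move=> k hk; rewrite Sigma_f //; try lia; rewrite E.
have := eps_ge b (_ : (1 <= k <= i)%N); lia.
Qed.

Lemma eps_e n i (b : arr n) : (1 <= i <= n)%N ->
  eps_star_nat i (b - shift_vec n i (M_star i b)) = eps_star_nat i b - 1 /\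
  m_star i (b - shift_vec n i (M_star i b)) = M_star i b.
Proof.
move=> hi; have hi1 : (1 <= i)%N by lia.
have [h1 h2 h3] := M_star_spec b hi1.
have E : eps_star_nat i (b - shift_vec n i (M_star i b)) = eps_star_nat i b - 1.
  apply: eps_char => //.
    move=> k hk; rewrite Sigma_e //; try lia.
    have := eps_ge b hk; case: (ltnP (M_star i b) k) => c.
      have := h3 k ltac:(lia); lia.
    lia.
  by exists (M_star i b) => //; rewrite Sigma_e //; try lia; rewrite h2; lia.
split => //; apply: m_star_uniq => //.
  by rewrite Sigma_e //; try lia; rewrite h2 E; lia.
move=> k hk; rewrite Sigma_e //; try lia; rewrite E.
have := eps_ge b (_ : (1 <= k <= i)%N); lia.
Qed.

Definition validB n (b : arr n) : Prop :=
  [/\ (forall p : 'I_n.+1 * 'I_n.+1, ~~ inI n p.1 p.2 -> b p = 0),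
      (forall s t, 0 <= getb b s t) &
      (forall k s, (k <= n)%N -> (1 <= s)%N -> (s < k)%N ->
         getb b s.+1 (k - s) <= getb b s (k.+1 - s))].

Lemma inBinfP n (b : arr n) : inBinf b <-> validB b.
Proof.
split.
  case/andP => /forallP H1 /forallP H2; split.
  - move=> p hp; have := H1 p; rewrite (negbTE hp) /=; by case/andP => _ /eqP.
  - move=> s t; rewrite /getb; case: ifP => // _; by case/andP: (H1 (inord s, inord t)).
  - move=> k s hk h1 h2.
    have := H2 (inord k); move/forallP/(_ (inord s)); rewrite !inordK; lia.

case=> H1 H2 H3; apply/andP; split; apply/forallP => p.
  case: (boolP (inI n p.1 p.2)) => h; last by rewrite H1 ?eqxx ?orbT.
  by rewrite -(getb_in b h) H2.
apply/forallP => s; apply/implyP => /andP [h1 h2]; apply: H3 => //.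
by have := ltn_ord p; lia.
Qed.


Lemma Xstep n (b : arr n) i x : validB b -> (i <= n)%N -> (1 <= x)%N -> (x < i)%N ->
  getb b x.+1 (i - x) <= getb b x (i.+1 - x).
Proof. by case=> _ _ H3 hi h1 h2; apply: H3. Qed.

Lemma Xmono n (b : arr n) i s s' : validB b -> (i <= n)%N -> (1 <= s)%N -> (s <= s')%N -> (s' <= i)%N ->
  getb b s' (i.+1 - s') <= getb b s (i.+1 - s).
Proof.
move=> hb hi h1 h2 h3; have [d ed] : exists d, s' = (s + d)%N by exists (s' - s)%N; lia.
subst s'; elim: d h2 h3 => [|d IH] h2 h3; first by rewrite addn0.
have hh2 : (s <= s + d)%N by lia.
have hh3 : (s + d <= i)%N by lia.
apply: (le_trans _ (IH hh2 hh3)).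
have hs1 : (1 <= s + d)%N by lia.
have hs2 : (s + d < i)%N by lia.
by have := Xstep hb hi hs1 hs2; rewrite addnS subSS.
Qed.

Lemma Ystep n (b : arr n) i x : validB b -> (i <= n)%N -> (1 <= x)%N -> (x < i)%N ->
  getb b x.+1 (i - x.+1) <= getb b x (i - x).
Proof.
case=> _ H2 H3 hi h1 h2.
case: (ltnP x.+1 i) => c.
  have hs1 : (i.-1 <= n)%N by lia.
  have hs2 : (x < i.-1)%N by lia.
  have := H3 i.-1 x hs1 h1 hs2.
  have -> : (i.-1 - x = i - x.+1)%N by lia.
  by have -> : (i.-1.+1 - x = i - x)%N by lia.
have -> : (i - x.+1 = 0)%N by lia.
by rewrite getb_out ?H2 // /inI; lia.
Qed.

Lemma valid_f n (b : arr n) i : validB b -> (1 <= i <= n)%N ->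
  validB (b + shift_vec n i (m_star i b)).
Proof.
move=> hb hi; have hi1 : (1 <= i)%N by lia.
have hin : (i <= n)%N by lia.
have [h1 h2 h3] := m_star_spec b hi1.
move: h1 h2 h3; set m := m_star i b => h1 h2 h3.
have hb' := hb; case: hb' => H1 H2 H3.
have F1 : forall s, (1 <= s < m)%N -> 1 <= getb b s (i - s).
  move=> s hs; have := h3 s hs; rewrite -h2 !Sigma_XY; try lia.
  have hs1 : (1 <= s)%N by lia.
  have hs2 : (s <= m)%N by lia.
  have hs3 : (m <= i)%N by lia.
  have := Xmono hb hin hs1 hs2 hs3; have := H2 m (i - m)%N; lia.
have F2 : forall s, (1 <= s)%N -> s.+1 = m -> getb b s.+1 (i - s.+1) < getb b s (i - s).
  move=> s hs e; have hsm : (1 <= s < m)%N by lia.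
  have := h3 s hsm; rewrite -h2 -e !Sigma_XY; try lia.
  have hsi : (s < i)%N by lia.
  have := Xstep hb hin hs hsi; rewrite subSS; lia.
split.
- by move=> p hp; rewrite ffunE H1 // shift_out // addr0.
- move=> s t; rewrite getbD getb_shift; try lia.
  case: (boolP ((s + t == i) && (0 < s < m))%N) => c.
    have [e1 e2] : t = (i - s)%N /\ (1 <= s < m)%N by lia.
    by rewrite e1; have := F1 s e2; rewrite /Dsh; lia.
  by have := H2 s t; rewrite /Dsh; lia.
- move=> k s hk hs1 hs2; rewrite !getbD !getb_shift; try lia.
  have := H3 k s hk hs1 hs2.
  case: (boolP ((k.+1 == i) && (s.+1 == m))) => c.
    move/andP: c => [/eqP ek /eqP es].
    have := F2 s hs1 es; rewrite -ek subSS; rewrite /Dsh; lia.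
  by rewrite /Dsh; lia.
Qed.

Lemma valid_e n (b : arr n) i : validB b -> (1 <= i <= n)%N -> 0 < eps_star_nat i b ->
  validB (b - shift_vec n i (M_star i b)).
Proof.
move=> hb hi hpos; have hi1 : (1 <= i)%N by lia.
have hin : (i <= n)%N by lia.
have [h1 h2 h3] := M_star_spec b hi1.
move: h1 h2 h3; set m := M_star i b => h1 h2 h3.
have hb' := hb; case: hb' => H1 H2 H3.
have E1 : forall t, (1 <= t <= m)%N -> 1 <= getb b t (i.+1 - t).
  move=> t ht; move: hpos; rewrite -h2 !Sigma_XY; try lia.
  have hs1 : (1 <= t)%N by lia.
  have hs2 : (t <= m)%N by lia.
  have hs3 : (m <= i)%N by lia.
  have := Xmono hb hin hs1 hs2 hs3; have := H2 m (i - m)%N; lia.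
have E2 : forall s, s = m -> (s < i)%N -> getb b s.+1 (i - s) < getb b s (i.+1 - s).
  move=> s e hsi; have hsm : (m < s.+1 <= i)%N by lia.
  have := h3 s.+1 hsm; rewrite -h2 -e !Sigma_XY; try lia.
  have hs : (1 <= s)%N by lia.
  have := Ystep hb hin hs hsi; rewrite subSS; lia.
split.
- by move=> p hp; rewrite !ffunE H1 // shift_out // subr0.
- move=> s t; rewrite getbB getb_shift; try lia.
  case: (boolP ((s + t == i.+1) && (0 < s <= m))%N) => c.
    have [e1 e2] : t = (i.+1 - s)%N /\ (1 <= s <= m)%N by lia.
    by rewrite e1; have := E1 s e2; rewrite /Dsh; lia.
  by have := H2 s t; rewrite /Dsh; lia.
- move=> k s hk hs1 hs2; rewrite !getbB !getb_shift; try lia.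
  have := H3 k s hk hs1 hs2.
  case: (boolP ((k == i) && (s == m))) => c.
    move/andP: c => [/eqP ek /eqP es].
    have hsi : (s < i)%N by lia.
    have := E2 s es hsi; rewrite -ek; rewrite /Dsh; lia.
  by rewrite /Dsh; lia.
Qed.

Lemma sum_pt N (F : nat -> int) c : (forall s, s != c -> F s = 0) ->
  \sum_(0 <= s < N) F s = if (c < N)%N then F c else 0.
Proof.
move=> H; elim: N => [|N IH]; first by rewrite big_geq.
rewrite big_nat_recr //= IH.
case: (eqVneq N c) => [->|hN]; first by rewrite ltnn ltnSn add0r.
rewrite (H N hN) addr0.
have -> : (c < N.+1)%N = (c < N)%N by apply/idP/idP; move: hN; lia.
by [].
Qed.

Lemma sum_Dsh n (i0 j : 'I_n) m : (1 <= m <= i0.+1)%N ->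
  \sum_(0 <= s < n.+2) Dsh i0.+1 m s j.+1 = (i0 == j)%:Z.
Proof.
move=> hm; have hi := ltn_ord i0; have hj := ltn_ord j.
rewrite /Dsh sumrB (@sum_pt _ _ (i0.+1 - j)%N); last by move=> s hs; lia.
rewrite (@sum_pt _ _ (i0.+1 - j.+1)%N); last by move=> s hs; lia.
rewrite -val_eqE /= !ifT; lia.
Qed.

Lemma wt_f n (b : arr n) (i0 : 'I_n) m : (1 <= m <= i0.+1)%N ->
  wtB (b + shift_vec n i0.+1 m) = wtB b - alphaA i0.
Proof.
move=> hm; apply/ffunP => j; rewrite !ffunE.
have hi := ltn_ord i0.
have -> : \sum_(0 <= s < n.+2) getb (b + shift_vec n i0.+1 m) s j.+1 =
   \sum_(0 <= s < n.+2) getb b s j.+1 + \sum_(0 <= s < n.+2) Dsh i0.+1 m s j.+1.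
  by rewrite -big_split /=; apply: eq_bigr => s _; rewrite getbD getb_shift //; lia.
rewrite sum_Dsh //; lia.
Qed.

Lemma wt_e n (b : arr n) (i0 : 'I_n) m : (1 <= m <= i0.+1)%N ->
  wtB (b - shift_vec n i0.+1 m) = wtB b + alphaA i0.
Proof.
move=> hm; apply/ffunP => j; rewrite !ffunE.
have hi := ltn_ord i0.
have -> : \sum_(0 <= s < n.+2) getb (b - shift_vec n i0.+1 m) s j.+1 =
   \sum_(0 <= s < n.+2) getb b s j.+1 - \sum_(0 <= s < n.+2) Dsh i0.+1 m s j.+1.
  by rewrite -sumrB /=; apply: eq_bigr => s _; rewrite getbB getb_shift //; lia.
rewrite sum_Dsh //; lia.
Qed.

Lemma pair_alpha n (i0 : 'I_n) : pairA i0 (alphaA i0) = 2.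
Proof.
rewrite /pairA (bigD1 i0) //= big1 ?addr0.
  by rewrite ffunE eqxx /cartanA eqxx.
by move=> j hj; rewrite ffunE eq_sym (negbTE hj) mulr0.
Qed.

Lemma pairD n (i0 : 'I_n) (w1 w2 : weightA n) : pairA i0 (w1 + w2) = pairA i0 w1 + pairA i0 w2.
Proof. by rewrite /pairA -big_split; apply: eq_bigr => j _; rewrite ffunE mulrDr. Qed.

Lemma pairB n (i0 : 'I_n) (w1 w2 : weightA n) : pairA i0 (w1 - w2) = pairA i0 w1 - pairA i0 w2.
Proof. by rewrite /pairA -sumrB; apply: eq_bigr => j _; rewrite !ffunE mulrBr. Qed.

Lemma sum_alpha n (i0 : 'I_n) : \sum_(j < n) alphaA i0 j = 1.
Proof.
rewrite (bigD1 i0) //= big1 ?addr0 ?ffunE ?eqxx //.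
by move=> j hj; rewrite ffunE eq_sym (negbTE hj).
Qed.

Lemma eps_nonneg n (b : arr n) i : validB b -> (1 <= i <= n)%N -> 0 <= eps_star_nat i b.
Proof.
case=> _ H2 _ hi; have hk : (1 <= i <= i)%N by lia.
have := eps_ge b hk; rewrite Sigma_XY // subnn (@getb_out n b i 0%N); last by rewrite /inI; lia.
by have := H2 i (i.+1 - i)%N; lia.
Qed.

Lemma zero_of_eps n (b : arr n) : validB b -> (forall i0 : 'I_n, eps_star i0 b <= 0) -> b = 0.
Proof.
case=> H1 H2 H3 hle.
have G : forall t s, getb b s t = 0.
  elim=> [|t IH] s; first by rewrite getb_out // /inI; lia.
  case: (boolP (inI n s t.+1)) => h; last by rewrite getb_out.
  have hi : ((s + t).-1 < n)%N by move: h; rewrite /inI; lia.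
  have := hle (Ordinal hi); rewrite /eps_star /=.
  have -> : ((s + t).-1.+1 = s + t)%N by move: h; rewrite /inI; lia.
  have hk : (1 <= s <= s + t)%N by move: h; rewrite /inI; lia.
  have := eps_ge b hk; rewrite Sigma_XY; last by lia.
  have -> : ((s + t).+1 - s = t.+1)%N by lia.
  have -> : (s + t - s = t)%N by lia.
  by rewrite IH; have := H2 s t.+1; lia.
apply/ffunP => p; rewrite ffunE; case: (boolP (inI n p.1 p.2)) => h; last exact: H1.
by rewrite -(getb_in b h) G.
Qed.

Definition mu n (b : arr n) : int := - \sum_(j < n) wtB b j.

Lemma mu_ge0 n (b : arr n) : validB b -> 0 <= mu b.
Proof.
case=> _ H2 _; rewrite /mu -sumrN; apply: sumr_ge0 => j _; rewrite ffunE opprK.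
by apply: sumr_ge0 => s _; apply: H2.
Qed.

Lemma mu_e n (b b' : arr n) (i0 : 'I_n) : wtB b' = wtB b + alphaA i0 -> mu b' = mu b - 1.
Proof.
move=> E; rewrite /mu E.
have -> : \sum_(j < n) (wtB b + alphaA i0) j = \sum_(j < n) wtB b j + \sum_(j < n) alphaA i0 j.
  by rewrite -big_split; apply: eq_bigr => j _; rewrite ffunE.
by rewrite sum_alpha opprD.
Qed.

Lemma e_some n (b : arr n) (i0 : 'I_n) : validB b -> 0 < eps_star i0 b ->
  exists b', [/\ e_star i0 b = Some b', validB b', eps_star i0 b' = eps_star i0 b - 1
              & wtB b' = wtB b + alphaA i0].
Proof.
move=> hb hpos; have hi : (1 <= i0.+1 <= n)%N by have := ltn_ord i0; lia.
have hi1 : (1 <= i0.+1)%N by lia.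
have [h1 _ _] := M_star_spec b hi1.
exists (b - shift_vec n i0.+1 (M_star i0.+1 b)); split.
- by rewrite /e_star hpos.
- exact: valid_e.
- by rewrite /eps_star (proj1 (eps_e b hi)).
- exact: wt_e.
Qed.

Lemma iter_some n (b : arr n) (i0 : 'I_n) : validB b -> forall m : nat, m%:Z <= eps_star i0 b ->
  exists b', [/\ iter_e (@e_star n) i0 m b = Some b', validB b' & eps_star i0 b' = eps_star i0 b - m%:Z].
Proof.
move=> hb; elim=> [|m IH] hm; first by exists b; rewrite subr0.
have [|b' [h1 h2 h3]] := IH; first by lia.
have [|b'' [e1 e2 e3 _]] := @e_some n b' i0 h2; first by lia.
exists b''; split => //.
  by change (obind (e_star i0) (iter_e (@e_star n) i0 m b) = Some b''); rewrite h1.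
by rewrite e3 h3; lia.
Qed.

Lemma iter_none n (b : arr n) (i0 : 'I_n) : validB b -> forall m : nat, eps_star i0 b < m%:Z ->
  iter_e (@e_star n) i0 m b = None.
Proof.
move=> hb; have hi : (1 <= i0.+1 <= n)%N by have := ltn_ord i0; lia.
have h0 := eps_nonneg hb hi.
elim=> [|m IH] hm; first by move: h0 hm; rewrite /eps_star; lia.
change (obind (e_star i0) (iter_e (@e_star n) i0 m b) = None).
case: (ltP (eps_star i0 b) m%:Z) => c; first by rewrite IH.
have [|b' [h1 h2 h3]] := @iter_some n b i0 hb m; first by lia.
by rewrite h1 /= /e_star ifF //; apply/negbTE; rewrite -leNgt; rewrite h3; lia.
Qed.

Theorem proposition6p1 (n : nat) (hn : (1 <= n)%N) :
  is_highest_weight_crystal (@pairA n) (@alphaA n) (@inBinf n) (@wtB n)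
    (@eps_star n) (@phi_star n) (@e_star n) (@f_star n).
Proof.
split.
- move=> i0 b /inBinfP hb.
  have hi : (1 <= i0.+1 <= n)%N by have := ltn_ord i0; lia.
  have hi1 : (1 <= i0.+1)%N by lia.
  have h0 := eps_nonneg hb hi.
  have [hm1 _ _] := m_star_spec b hi1.
  split => //.
  + split.
    * rewrite /e_star; case: ifP => // hpos b' [<-]; apply/inBinfP; exact: valid_e.
    * move=> b' [<-]; apply/inBinfP; exact: valid_f.
  + rewrite /e_star; case: ifP => // hpos b' [<-].
    have [hM1 _ _] := M_star_spec b hi1.
    have [E _] := eps_e b hi.
    have W := wt_e b hM1.
    split; rewrite /phi_star /eps_star ?W ?E ?pairD ?pair_alpha //; lia.
  + move=> b' [<-].
    have [E _] := eps_f b hi.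
    have W := wt_f b hm1.
    split; rewrite /phi_star /eps_star ?W ?E ?pairB ?pair_alpha //; lia.
  + move=> b' /inBinfP hb'; split.
    * move=> [<-]; have [E M] := eps_f b hi.
      rewrite /e_star /eps_star E M ifT; first by rewrite addrK.
      by move: h0; lia.
    * rewrite /e_star; case: ifP => // hpos [<-].
      have [E m] := eps_e b' hi.
      by rewrite /f_star m subrK.
- exists 0.
    apply/inBinfP; split.
    + by move=> p _; rewrite ffunE.
    + by move=> s t; rewrite getb0.
    + by move=> *; rewrite !getb0.
  suff H : forall N : nat, forall b, validB b -> mu b <= N%:Z ->
      exists s : seq 'I_n, foldl (fun ob i => obind (e_star i) ob) (Some b) s = Some 0.
    move=> b /inBinfP hb; apply: (H (absz (mu b)) b hb).
    by have := mu_ge0 hb; lia.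
  elim=> [|N IH] b hb hmu.
  + case: (boolP [exists i0 : 'I_n, 0 < eps_star i0 b]) => [/existsP [i0 hpos] | /existsPn hno].
      have [b' [_ h2 _ h4]] := e_some hb hpos.
      have := mu_ge0 h2; rewrite (mu_e h4); lia.
    exists [::]; rewrite (zero_of_eps hb) // => i0.
    by have := hno i0; lia.
  + case: (boolP [exists i0 : 'I_n, 0 < eps_star i0 b]) => [/existsP [i0 hpos] | /existsPn hno].
      have [b' [h1 h2 _ h4]] := e_some hb hpos.
      have [|s hs] := IH b' h2; first by rewrite (mu_e h4); lia.
      by exists (i0 :: s); rewrite /= h1.
    exists [::]; rewrite (zero_of_eps hb) // => i0.
    by have := hno i0; lia.
- move=> i0 b /inBinfP hb.
  have hi : (1 <= i0.+1 <= n)%N by have := ltn_ord i0; lia.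
  have h0 := eps_nonneg hb hi.
  split.
  + exact: h0.
  + have [|b' [h1 _ _]] := @iter_some n b i0 hb `|eps_star i0 b|%N; first by move: h0; rewrite /eps_star; lia.
    by rewrite h1.
  + move=> m hne; rewrite leNgt; apply/negP => hlt; apply: hne; exact: iter_none.
Qed.
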